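(* Let $S\subset\mathbb{R}^d$ be a nonempty compact convex set with diameter $D:=\sup_{x,y\in S}\|x-y\|$, and let $f$ be differentiable on $S$ with $L$-Lipschitz gradient on $S$. Let $G:=\sup_{x\in S}\|\nabla f(x)\|<\infty$ and fix $C\ge\max\{LD^2,\,GD\}$ with $C>0$. Let $\delta\ge0$ and suppose that for every $x\in S$ a vector $g_\delta(x)\in\mathbb{R}^d$ is available with \[ \big|\langle \nabla f(x)-g_\delta(x),\,s-x\rangle\big|\le\delta\,\|\nabla f(x)\|\quad\text{for all } s\in S. \] Let $\tilde{\mathcal G}(x):=\max_{s\in S}\langle g_\delta(x),\,x-s\rangle$. Given $x^0\in S$, define iterates for $k=0,1,2,\dots$ by choosing $s^k\in\arg\min_{s\in S}\langle g_\delta(x^k),\,s-x^k\rangle$, setting \[ \overline\alpha_k:=\frac{\big(\tilde{\mathcal G}(x^k)-\delta\|\nabla f(x^k)\|\big)_+}{C},\qquad x^{k+1}:=x^k+\overline\alpha_k(s^k-x^k), \] where $(u)_+:=\max\{u,0\}$. Then for every $k\ge0$, \[ f(x^{k+1})\le f(x^k)-\frac{\big(\tilde{\mathcal G}(x^k)-\delta\|\nabla f(x^k)\|\big)_+^2}{2C}. \]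
   Context: $\|\cdot\|$ is the Euclidean norm and $\langle\cdot,\cdot\rangle$ the Euclidean inner product. $f$ need not be convex. *)

(* Defs.v *)
From HB Require Import structures.
From mathcomp Require Import all_boot all_order all_algebra.
From mathcomp Require Import all_classical all_reals all_analysis.
Set Implicit Arguments. Unset Strict Implicit. Unset Printing Implicit Defensive.
Import Order.TTheory GRing.Theory Num.Theory.
Import numFieldNormedType.Exports.
Local Open Scope classical_set_scope.
Local Open Scope ring_scope.

(* Euclidean inner product and Euclidean norm on R^d = 'rV[R]_d.
   (The library's canonical norm on matrices is the max norm, so we
   define the Euclidean ones explicitly.) *)
Definition edot {R : realType} {d : nat} (u v : 'rV[R]_d) : R :=
  \sum_(i < d) u ord0 i * v ord0 i.

Definition enorm {R : realType} {d : nat} (u : 'rV[R]_d) : R :=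
  Num.sqrt (edot u u).

Definition convex_in {R : realType} {d : nat} (S : set 'rV[R]_d) : Prop :=
  forall x y (t : R), S x -> S y -> 0 <= t -> t <= 1 ->
    S (t *: x + (1 - t) *: y).

Definition diam {R : realType} {d : nat} (S : set 'rV[R]_d) : R :=
  sup [set enorm (x - y) | x in S & y in S].

Definition pospart {R : realType} (u : R) : R := Num.max u 0.

(* Main.v *)
Require Import Defs.
From HB Require Import structures.
From mathcomp Require Import all_boot all_order all_algebra.
From mathcomp Require Import all_classical all_reals all_analysis.
From mathcomp Require Import ring lra.
Import Order.TTheory GRing.Theory Num.Theory.
Import numFieldNormedType.Exports.
Local Open Scope classical_set_scope.
Local Open Scope ring_scope.
Set Implicit Arguments. Unset Strict Implicit. Unset Printing Implicit Defensive.

Section H.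
Variables (R : realType) (d : nat).
Implicit Types u v w : 'rV[R]_d.

Lemma edotC u v : edot u v = edot v u.
Proof. by apply: eq_bigr => i _; rewrite mulrC. Qed.
Lemma edotBl u w v : edot (u - w) v = edot u v - edot w v.
Proof. by rewrite /edot -sumrB; apply: eq_bigr => i _; rewrite !mxE mulrBl. Qed.
Lemma edotBr u w v : edot v (u - w) = edot v u - edot v w.
Proof. by rewrite /edot -sumrB; apply: eq_bigr => i _; rewrite !mxE mulrBr. Qed.
Lemma edotZr a u v : edot u (a *: v) = a * edot u v.
Proof. by rewrite /edot mulr_sumr; apply: eq_bigr => i _; rewrite !mxE mulrCA. Qed.
Lemma edotZl a u v : edot (a *: u) v = a * edot u v.
Proof. by rewrite edotC edotZr edotC. Qed.
Lemma edot_ge0 u : 0 <= edot u u.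
Proof. by apply: sumr_ge0 => i _; rewrite -expr2 sqr_ge0. Qed.
Lemma enorm_ge0 u : 0 <= enorm u.
Proof. exact: sqrtr_ge0. Qed.
Lemma enorm_sq u : enorm u ^+ 2 = edot u u.
Proof. by rewrite sqr_sqrtr // edot_ge0. Qed.
Lemma enormZ a u : enorm (a *: u) = `|a| * enorm u.
Proof.
by rewrite /enorm edotZl edotZr mulrA -expr2 sqrtrM ?sqr_ge0 // sqrtr_sqr.
Qed.

Lemma CS2 u v : edot u v ^+ 2 <= edot u u * edot v v.
Proof.
have H : 0 <= \sum_(i < d) \sum_(j < d)
   (u ord0 i * v ord0 j - u ord0 j * v ord0 i) ^+ 2.
  by apply: sumr_ge0 => i _; apply: sumr_ge0 => j _; exact: sqr_ge0.
have E : \sum_(i < d) \sum_(j < d)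
   (u ord0 i * v ord0 j - u ord0 j * v ord0 i) ^+ 2 =
   edot u u * edot v v + edot v v * edot u u - (edot u v * edot u v) *+ 2.
  rewrite /edot !big_distrlr /= -!sumrMnl -big_split -sumrB /=; apply: eq_bigr => i _.
  rewrite -!sumrMnl -big_split -sumrB; apply: eq_bigr => j _ /=.
  ring.
rewrite E mulrC [edot v v * _]mulrC -expr2 in H; lra.
Qed.

Lemma CS u v : `|edot u v| <= enorm u * enorm v.
Proof.
rewrite -ler_sqr ?nnegrE ?mulr_ge0 ?enorm_ge0 //.
by rewrite exprMn !enorm_sq real_normK ?num_real // CS2.
Qed.
End H.
Lemma phi_derive (R : realType) (d : nat) (f : 'rV[R]_d -> R) (y v : 'rV[R]_d) (t : R) :
  differentiable f (y + t *: v) ->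
  is_derive t 1 (fun t => f (y + t *: v)) ('d f (y + t *: v) v).
Proof.
move=> df.
have key : (fun h : R => h^-1 *: (((fun t => f (y + t *: v)) \o shift t) (h *: 1) - f (y + t *: v))) =
   (fun h : R => h^-1 *: ((f \o shift (y + t *: v)) (h *: v) - f (y + t *: v))).
  apply: funext => h /=; congr (_ *: (f _ - _)).
  have -> : h%:A = h :> R by rewrite [LHS]mulr1.
  by rewrite scalerDl addrCA.
apply: DeriveDef; first by rewrite /derivable key; exact: diff_derivable.
by rewrite /derive key -/(derive f _ v) deriveE.
Qed.
Lemma quad_derive (R : realType) (e k t : R) :
  is_derive t 1 (fun t : R => t * e + k * t ^+ 2) (e + k * (2 * t)).
Proof.
apply: is_derive_eq.
rewrite scaler0 add0r; rewrite /GRing.scale/=. ring.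
Qed.


Lemma descent (R : realType) (d : nat) (f : 'rV[R]_d -> R) (grad : 'rV[R]_d -> 'rV[R]_d)
  (L : R) (y v : 'rV[R]_d) (a : R) :
  0 <= a -> a <= 1 ->
  (forall t, 0 <= t -> t <= 1 -> differentiable f (y + t *: v) /\
     forall h, 'd f (y + t *: v) h = edot (grad (y + t *: v)) h) ->
  (forall t, 0 <= t -> t <= 1 ->
     enorm (grad (y + t *: v) - grad y) <= L * enorm (t *: v)) ->
  f (y + a *: v) <= f y + a * edot (grad y) v + L * edot v v * a ^+ 2 / 2.
Proof.
move=> a0 a1 Hd Hl.
have [->|aneq] := eqVneq a 0.
  by rewrite scale0r addr0 expr0n /= !mulr0 !mul0r !addr0.
have apos : 0 < a by rewrite lt_neqAle eq_sym aneq a0.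
set e := edot (grad y) v; set ee := edot v v.
pose psi t := f (y + t *: v) - (t * e + (L * ee / 2) * t ^+ 2).
pose dpsi t := edot (grad (y + t *: v)) v - (e + (L * ee / 2) * (2 * t)).
have dps : forall t : R, 0 <= t -> t <= 1 -> is_derive t 1 psi (dpsi t).
  move=> t t0 t1; have [dft dfE] := Hd t t0 t1.
  have h1 := phi_derive dft; rewrite dfE in h1.
  have h2 := quad_derive e (L * ee / 2) t.
  exact: (is_deriveB h1 h2).
have [c cin E] : exists2 c, c \in `]0, a[ & psi a - psi 0 = dpsi c * (a - 0).
  apply: MVT => //.
    move=> t; rewrite in_itv /= => /andP[t0 t1]; apply: dps; lra.
  apply: derivable_within_continuous => t; rewrite in_itv /= => /andP[t0 t1].
  by have [] := dps t t0 (le_trans t1 a1).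
move: cin; rewrite in_itv /= => /andP[c0 c1].
have dneg : dpsi c <= 0.
  have := Hl c (ltW c0) (ltW (lt_le_trans c1 a1)).
  rewrite enormZ ger0_norm ?(ltW c0) // => hl.
  have cs := CS (grad (y + c *: v) - grad y) v.
  rewrite edotBl in cs.
  have := ler_norm (edot (grad (y + c *: v)) v - edot (grad y) v).
  have hv := enorm_ge0 v.
  have : enorm (grad (y + c *: v) - grad y) * enorm v <= L * (c * enorm v) * enorm v.
    by apply: ler_wpM2r.
  have hee : enorm v * enorm v = ee by rewrite -expr2 enorm_sq.
  rewrite /dpsi -/e => h3 h4.
  have : L * (c * enorm v) * enorm v = L * c * ee by rewrite -hee; ring.
  rewrite -/e in cs => h5.
  lra.
have : psi a <= psi 0 by nra.
rewrite /psi scale0r addr0 mul0r expr0n /= mulr0 addr0 subr0.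
move=> h; lra.
Qed.

Lemma entry_le (R : realType) (d : nat) (w : 'rV[R]_d) i : `|w ord0 i| <= `|w|.
Proof.
rewrite [X in _ <= X]mx_normrE.
exact: (le_bigmax 0 (fun ij : 'I_1 * 'I_d => `|w ij.1 ij.2|) (ord0, i)).
Qed.

Lemma edot_le_norm (R : realType) (d : nat) (w : 'rV[R]_d) :
  edot w w <= d%:R * `|w| ^+ 2.
Proof.
rewrite /edot; apply: le_trans (_ : \sum_(i < d) `|w| ^+ 2 <= _).
  apply: ler_sum => i _; have h := entry_le w i.
  have h0 := normr_ge0 (w ord0 i).
  rewrite -expr2 -real_normK ?num_real //; nra.
by rewrite sumr_const card_ord mulr_natl.
Qed.

Lemma bound (R : realType) (d : nat) (S : set 'rV[R]_d) :
  compact S -> exists B, forall y z, S y -> S z -> enorm (y - z) <= B.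
Proof.
move=> /compact_bounded /= [M0 [_ HM0]].
have HM : forall x, S x -> `|x| <= `|M0| + 1.
  by apply: HM0; have := ler_norm M0; lra.
set M := `|M0| + 1.
have Mp : 0 <= M by rewrite /M; have := normr_ge0 M0; lra.
exists (Num.sqrt (d%:R * (M + M) ^+ 2)) => y z Sy Sz.
rewrite /enorm ler_sqrt ?mulr_ge0 ?sqr_ge0 //.
apply: le_trans (edot_le_norm _) _.
have hy : `|y| <= M := HM y Sy.
have hz : `|z| <= M := HM z Sz.
have := ler_normB y z.
have := normr_ge0 (y - z).
have hd : 0 <= d%:R :> R by [].
move=> h1 h2.
apply: ler_wpM2l => //.
have : `|y - z| <= M + M by lra.
move=> h3; nra.
all: lra.
Qed.

Lemma edotNr (R : realType) (d : nat) (u v : 'rV[R]_d) : edot u (- v) = - edot u v.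
Proof. by rewrite -scaleN1r edotZr mulN1r. Qed.

Lemma step (R : realType) (d : nat) (S : set 'rV[R]_d)
  (f : 'rV[R]_d -> R) (grad : 'rV[R]_d -> 'rV[R]_d) (L C delta D G : R)
  (gy y sy : 'rV[R]_d) :
  convex_in S ->
  (forall z, S z -> differentiable f z /\ forall h, 'd f z h = edot (grad z) h) ->
  (forall z w, S z -> S w -> enorm (grad z - grad w) <= L * enorm (z - w)) ->
  (forall z w, S z -> S w -> enorm (z - w) <= D) ->
  (forall z, S z -> enorm (grad z) <= G) ->
  0 < C -> L * D ^+ 2 <= C -> G * D <= C -> 0 <= delta ->
  (forall t, S t -> `| edot (grad y - gy) (t - y) | <= delta * enorm (grad y)) ->
  S y -> S sy -> (forall t, S t -> edot gy (sy - y) <= edot gy (t - y)) ->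
  S (y + (pospart (sup [set edot gy (y - t) | t in S] - delta * enorm (grad y)) / C)
        *: (sy - y)) /\
  f (y + (pospart (sup [set edot gy (y - t) | t in S] - delta * enorm (grad y)) / C)
        *: (sy - y)) <=
  f y - (pospart (sup [set edot gy (y - t) | t in S] - delta * enorm (grad y))) ^+ 2
        / (2 * C).
Proof.
move=> cvS Hd Hl HD HG C0 LC GC d0 Hg Sy Ssy Hmin.
set v := sy - y.
have neg : forall t, edot gy (y - t) = - edot gy (t - y).
  by move=> t; rewrite -opprB edotNr.
have Gt : sup [set edot gy (y - t) | t in S] = - edot gy v.
  apply/le_anti/andP; split.
    apply: ge_sup; first by exists (edot gy (y - sy)), sy.
    by move=> _ [t St <-]; rewrite neg lerN2; exact: Hmin.
  apply: ub_le_sup.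
    by exists (- edot gy v) => _ [t St <-]; rewrite neg lerN2; exact: Hmin.
  by exists sy => //; rewrite neg.
rewrite Gt.
set n := enorm (grad y).
set a := - edot gy v - delta * n.
set p := pospart a.
set e := edot (grad y) v.
have he : e <= edot gy v + delta * n.
  have := Hg sy Ssy; rewrite -/v edotBl -/e -/n => h.
  have := ler_norm (e - edot gy v); lra.
have nv : `|e| <= n * enorm v by exact: CS.
have nvG : n * enorm v <= G * D.
  by apply: ler_pM; rewrite ?enorm_ge0 //; [exact: HG | exact: HD].
have aC : a <= C.
  rewrite /a; have := ler_norm (- e); rewrite normrN; lra.
have p0 : 0 <= p by rewrite /p /pospart le_max lexx orbT.
have pC : p <= C by rewrite /p /pospart ge_max aC ltW.
have pa : p * a = p * p.
  by rewrite /p /pospart maxElt; case: ifPn => _; rewrite ?mul0r.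
set al := p / C.
have al0 : 0 <= al by rewrite divr_ge0 // ltW.
have al1 : al <= 1 by rewrite ler_pdivrMr // mul1r.
have alC : al * C = p by rewrite divfK // gt_eqF.
have seg : forall t, y + t *: v = t *: sy + (1 - t) *: y.
  by move=> t; rewrite /v scalerBr scalerBl scale1r addrCA.
have inS : forall t, 0 <= t -> t <= 1 -> S (y + t *: v).
  by move=> t t0 t1; rewrite seg; apply: cvS.
split; first exact: inS.
have := @descent _ _ f grad L y v al al0 al1
  (fun t t0 t1 => Hd _ (inS t t0 t1)).
have Hl' : forall t, 0 <= t -> t <= 1 ->
    enorm (grad (y + t *: v) - grad y) <= L * enorm (t *: v).
  move=> t t0 t1; have := Hl _ _ (inS t t0 t1) Sy.
  by rewrite [y + _]addrC addrK.
move=> /(_ Hl') hdesc.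
have ev : edot v v <= D ^+ 2.
  have := HD sy y Ssy Sy; have := enorm_ge0 v; rewrite -enorm_sq -/v; nra.
have ee0 : 0 <= edot v v := edot_ge0 v.
have LeeC : L * edot v v <= C.
  have [L0|L0] := leP 0 L; nra.
have h1 : al * e <= al * (edot gy v + delta * n) by apply: ler_wpM2l.
have h2 : al * a = al * p.
  by rewrite /al mulrAC pa mulrAC.
have h3 : L * edot v v * al ^+ 2 <= al * p.
  rewrite -alC; have : 0 <= al ^+ 2 by rewrite sqr_ge0.
  nra.
have h4 : p ^+ 2 / (2 * C) = al * p / 2.
  by rewrite /al; field; rewrite gt_eqF.
rewrite h4.
have h5 : al * (edot gy v + delta * n) = - (al * a) by rewrite /a; ring.
rewrite -/e in hdesc; lra.
Qed.

Theorem lemma3 (R : realType) (d : nat) (S : set 'rV[R]_d)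
  (f : 'rV[R]_d -> R) (grad : 'rV[R]_d -> 'rV[R]_d)
  (L C delta : R) (g : 'rV[R]_d -> 'rV[R]_d)
  (x0 : 'rV[R]_d) (x s : nat -> 'rV[R]_d) :
  S !=set0 -> compact S -> convex_in S ->
  (* f differentiable on S with gradient grad *)
  (forall y, S y -> differentiable f y /\
     forall h, ('d f y) h = edot (grad y) h) ->
  (* L-Lipschitz gradient on S *)
  (forall y z, S y -> S z -> enorm (grad y - grad z) <= L * enorm (y - z)) ->
  (* G < oo *)
  has_ubound [set enorm (grad y) | y in S] ->
  0 < C ->
  L * diam S ^+ 2 <= C ->
  sup [set enorm (grad y) | y in S] * diam S <= C ->
  0 <= delta ->
  (forall y t, S y -> S t ->
     `| edot (grad y - g y) (t - y) | <= delta * enorm (grad y)) ->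
  S x0 -> x 0%N = x0 ->
  (forall k, S (s k) /\
     forall t, S t -> edot (g (x k)) (s k - x k) <= edot (g (x k)) (t - x k)) ->
  (forall k, x k.+1 = x k +
     (pospart (sup [set edot (g (x k)) (x k - t) | t in S]
                - delta * enorm (grad (x k))) / C) *: (s k - x k)) ->
  forall k, f (x k.+1) <= f (x k) -
     (pospart (sup [set edot (g (x k)) (x k - t) | t in S]
                - delta * enorm (grad (x k)))) ^+ 2 / (2 * C).
Proof.
move=> Sne cS cvS Hdiff Hlip Hub C0 LC GC d0 Hg Sx0 ex0 Hs Hx.
have [B HB] := bound cS.
have Dub : forall y z, S y -> S z -> enorm (y - z) <= diam S.
  move=> y z Sy Sz; apply: ub_le_sup.
    by exists B => _ [y' Sy' [z' Sz' <-]]; exact: HB.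
  by exists y => //; exists z.
have Gub : forall y, S y -> enorm (grad y) <= sup [set enorm (grad y) | y in S].
  by move=> y Sy; apply: ub_le_sup => //; exists y.
have stp : forall k, S (x k) -> S (x k.+1) /\ f (x k.+1) <= f (x k) -
     (pospart (sup [set edot (g (x k)) (x k - t) | t in S]
                - delta * enorm (grad (x k)))) ^+ 2 / (2 * C).
  move=> k Sxk; rewrite Hx.
  exact: (step cvS Hdiff Hlip Dub Gub C0 LC GC d0
    (fun t St => Hg _ _ Sxk St) Sxk (Hs k).1 (Hs k).2).
have inv : forall k, S (x k).
  by elim => [|k IH]; [rewrite ex0 | exact: (stp k IH).1].
by move=> k; exact: (stp k (inv k)).2.
Qed.
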